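(* Let $f_1,f_2:\mathbb{R}^n\to[-\infty,\infty]$ be proper nearly convex functions with $\operatorname{ri}(\operatorname{dom} f_1)\cap\operatorname{ri}(\operatorname{dom} f_2)\neq\emptyset$. Then $(f_1+f_2)^*(w)=(f_1^*\square f_2^* )(w)$ for all $w\in\mathbb{R}^n$. Moreover, if $(f_1+f_2)^*(w)\in\mathbb{R}$, there exist $w_1,w_2\in\mathbb{R}^n$ with $w=w_1+w_2$ and $(f_1+f_2)^*(w)=f_1^*(w_1)+f_2^*(w_2)$.
   Context: A set $\Omega$ is nearly convex if there is a convex set $C$ with $C\subset\Omega\subset\overline{C}$; $\operatorname{ri}\Omega=\{a\in\Omega:\exists\delta>0,\ B(a;\delta)\cap\operatorname{aff}\Omega\subset\Omega\}$. A function $f$ is nearly convex if $\operatorname{epi}f=\{(x,\lambda):f(x)\le\lambda\}$ is nearly convex, proper if $\operatorname{dom}f=\{f<\infty\}\neq\emptyset$ and $f>-\infty$. Fenchel conjugate: $f^*(w)=\sup_x\{\langle w,x\rangle-f(x)\}$. Infimal convolution: $(g\square h)(w)=\inf\{g(w_1)+h(w_2):w_1+w_2=w\}$. *)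

(* Defs.v *)
From mathcomp Require Import all_boot all_order all_algebra.
From mathcomp Require Import all_classical all_reals all_analysis.
Set Implicit Arguments. Unset Strict Implicit. Unset Printing Implicit Defensive.
Import Order.TTheory GRing.Theory Num.Theory.
Import numFieldNormedType.Exports.
Local Open Scope classical_set_scope.
Local Open Scope ring_scope.

Section Defs.
Variables (R : realType) (n : nat).

Definition dotp (u v : 'rV[R]_n) : R := \sum_(i < n) u 0 i * v 0 i.

Definition enorm (u : 'rV[R]_n) : R := Num.sqrt (dotp u u).
Definition eball (a : 'rV[R]_n) (d : R) : set 'rV[R]_n :=
  [set x | enorm (x - a) < d].

Definition affine_set (A : set 'rV[R]_n) : Prop :=
  forall x y (t : R), A x -> A y -> A ((1 - t) *: x + t *: y).
Definition aff (A : set 'rV[R]_n) : set 'rV[R]_n :=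
  \bigcap_(B in [set B | affine_set B /\ A `<=` B]) B.

Definition ri (O : set 'rV[R]_n) : set 'rV[R]_n :=
  [set a | O a /\ exists d : R, 0 < d /\ eball a d `&` aff O `<=` O].

Definition dom (f : 'rV[R]_n -> \bar R) : set 'rV[R]_n :=
  [set x | (f x < +oo)%E].
Definition epi (f : 'rV[R]_n -> \bar R) : set ('rV[R]_n * R) :=
  [set p | (f p.1 <= p.2%:E)%E].

Definition nearly_convex_set (O : set 'rV[R]_n) : Prop :=
  exists C : set (convex_lmodType 'rV[R]_n),
    convex_set C /\ C `<=` O /\ O `<=` closure (C : set 'rV[R]_n).
Definition nearly_convex_fun (f : 'rV[R]_n -> \bar R) : Prop :=
  exists C : set (convex_lmodType ('rV[R]_n * R)%type),
    convex_set C /\ C `<=` epi f /\ epi f `<=` closure (C : set ('rV[R]_n * R)).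

Definition proper_fun (f : 'rV[R]_n -> \bar R) : Prop :=
  dom f !=set0 /\ forall x, (-oo < f x)%E.

Definition fconj (f : 'rV[R]_n -> \bar R) (w : 'rV[R]_n) : \bar R :=
  ereal_sup [set ((dotp w x)%:E - f x)%E | x in [set: 'rV[R]_n]].

Definition infconv (g h : 'rV[R]_n -> \bar R) (w : 'rV[R]_n) : \bar R :=
  ereal_inf [set (g p.1 + h p.2)%E | p in [set p : 'rV[R]_n * 'rV[R]_n | p.1 + p.2 = w]].

End Defs.

(* Main.v *)
Require Import Defs.
From mathcomp Require Import all_boot all_order all_algebra.
From mathcomp Require Import all_classical all_reals all_analysis.
From mathcomp Require Import ring lra.
Import Order.TTheory GRing.Theory Num.Theory.
Import numFieldNormedType.Exports.
Local Open Scope classical_set_scope.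
Local Open Scope ring_scope.

Lemma dotpDl {R : realType} {n : nat} (u v x : 'rV[R]_n) :
  dotp (u + v) x = dotp u x + dotp v x.
Proof. by rewrite /dotp -big_split /=; apply: eq_bigr => i _; rewrite mxE mulrDl. Qed.

Lemma dotpZl {R : realType} {n : nat} (c : R) (u x : 'rV[R]_n) :
  dotp (c *: u) x = c * dotp u x.
Proof. by rewrite /dotp mulr_sumr; apply: eq_bigr => i _; rewrite mxE mulrA. Qed.

Lemma dotpC {R : realType} {n : nat} (u x : 'rV[R]_n) : dotp u x = dotp x u.
Proof. by apply: eq_bigr => i _; rewrite mulrC. Qed.

Lemma dotpDr {R : realType} {n : nat} (u v x : 'rV[R]_n) :
  dotp x (u + v) = dotp x u + dotp x v.
Proof. by rewrite !(dotpC x) dotpDl. Qed.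

Lemma dotpZr {R : realType} {n : nat} (c : R) (u x : 'rV[R]_n) :
  dotp x (c *: u) = c * dotp x u.
Proof. by rewrite !(dotpC x) dotpZl. Qed.

Lemma dotpNr {R : realType} {n : nat} (u x : 'rV[R]_n) :
  dotp x (- u) = - dotp x u.
Proof. by rewrite -scaleN1r dotpZr mulN1r. Qed.

Lemma dotpNl {R : realType} {n : nat} (u x : 'rV[R]_n) :
  dotp (- u) x = - dotp u x.
Proof. by rewrite -scaleN1r dotpZl mulN1r. Qed.

Lemma dotpBr {R : realType} {n : nat} (u v x : 'rV[R]_n) :
  dotp x (u - v) = dotp x u - dotp x v.
Proof. by rewrite dotpDr dotpNr. Qed.

Lemma dotpBl {R : realType} {n : nat} (u v x : 'rV[R]_n) :
  dotp (u - v) x = dotp u x - dotp v x.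
Proof. by rewrite dotpDl dotpNl. Qed.

Lemma dotp0r {R : realType} {n : nat} (x : 'rV[R]_n) : dotp x 0 = 0.
Proof. by rewrite /dotp big1 // => i _; rewrite mxE mulr0. Qed.

Lemma dotp_delta {R : realType} {n : nat} (j : 'I_n) (x : 'rV[R]_n) :
  dotp (delta_mx 0 j) x = x 0 j.
Proof.
rewrite /dotp (bigD1 j) //= big1 ?addr0; first by rewrite mxE !eqxx mul1r.
by move=> i /negPf ij; rewrite mxE ij andbF mul0r.
Qed.

Definition l1 {R : realType} {n : nat} (u : 'rV[R]_n) : R := \sum_i `|u 0 i|.

Lemma l1_ge0 {R : realType} {n : nat} (u : 'rV[R]_n) : 0 <= l1 u.
Proof. by apply: sumr_ge0 => i _. Qed.

Lemma l1D {R : realType} {n : nat} (u v : 'rV[R]_n) : l1 (u + v) <= l1 u + l1 v.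
Proof.
rewrite /l1 -big_split /=; apply: ler_sum => i _; rewrite mxE; exact: ler_normD.
Qed.

Lemma l1Z {R : realType} {n : nat} (c : R) (u : 'rV[R]_n) : l1 (c *: u) = `|c| * l1 u.
Proof. by rewrite /l1 mulr_sumr; apply: eq_bigr => i _; rewrite mxE normrM. Qed.

Lemma l1N {R : realType} {n : nat} (u : 'rV[R]_n) : l1 (- u) = l1 u.
Proof. by rewrite -scaleN1r l1Z normrN normr1 mul1r. Qed.

Lemma l1B {R : realType} {n : nat} (u v : 'rV[R]_n) : l1 (u - v) = l1 (v - u).
Proof. by rewrite -l1N opprB. Qed.

Lemma coord_le_l1 {R : realType} {n : nat} (u : 'rV[R]_n) i : `|u 0 i| <= l1 u.
Proof.
rewrite /l1 (bigD1 i) //= lerDl; by apply: sumr_ge0.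
Qed.

Lemma sum_sq_le {R : realType} (I : Type) (r : seq I) (F : I -> R) :
  (forall i, 0 <= F i) ->
  \sum_(i <- r) F i ^+ 2 <= (\sum_(i <- r) F i) ^+ 2.
Proof.
move=> F0; elim: r => [|a r IH]; first by rewrite !big_nil expr0n.
rewrite !big_cons.
have S0 : 0 <= \sum_(i <- r) F i by apply: sumr_ge0.
have := F0 a; nra.
Qed.

Lemma enorm_le_l1 {R : realType} {n : nat} (u : 'rV[R]_n) : enorm u <= l1 u.
Proof.
rewrite /enorm -(ger0_norm (l1_ge0 u)) -sqrtr_sqr.
apply: ler_wsqrtr.
rewrite /dotp /l1.
apply: (@le_trans _ _ (\sum_i `|u 0 i| ^+ 2)); last by apply: sum_sq_le.
by apply: ler_sum => i _; rewrite real_normK ?num_real // expr2.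
Qed.

Lemma dotp_le {R : realType} {n : nat} (a v : 'rV[R]_n) (d : R) :
  (forall i, `|v 0 i| <= d) -> `|dotp a v| <= l1 a * d.
Proof.
move=> H; rewrite /dotp /l1 mulr_suml.
apply: le_trans (ler_norm_sum _ _ _) _; apply: ler_sum => i _.
by rewrite normrM ler_wpM2l.
Qed.

Lemma convex_comb {R : realType} (M : lmodType R) (C : set (convex_lmodType M))
  (a b : M) (t : R) :
  convex_set C -> 0 <= t -> t <= 1 -> C a -> C b -> C (t *: a + (1 - t) *: b).
Proof.
move=> cC t0 t1 Ca Cb.
have := cC a b (Itv01 t0 t1); rewrite !inE => /(_ Ca Cb).
by [].
Qed.

Lemma ratio_key {R : realType} (a b X Y : R) :
  0 < a -> b < 0 -> 0 <= (- b / (a - b)) * X + (1 - (- b / (a - b))) * Y ->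
  Y / b <= X / a.
Proof.
move=> a0 b0 H.
have ab : 0 < a - b by lra.
have abn : a - b != 0 by rewrite gt_eqF.
have E : 1 - (- b / (a - b)) = a / (a - b) by field.
rewrite E in H.
have H2 : 0 <= - b * X + a * Y.
  have := mulr_ge0 H (ltW ab).
  have -> : (- b / (a - b) * X + a / (a - b) * Y) * (a - b) = - b * X + a * Y by field.
  by [].
have bn : b != 0 by rewrite lt_eqF.
have an : a != 0 by rewrite gt_eqF.
have P : 0 < (- b^-1) * a^-1 by apply: mulr_gt0; [rewrite oppr_gt0 invr_lt0 // | rewrite invr_gt0].
have := mulr_ge0 H2 (ltW P).
have -> : (- b * X + a * Y) * (- b^-1 * a^-1) = X / a - Y / b by field; rewrite an bn.
by rewrite subr_ge0.
Qed.

Lemma HB_sep {R : realType} {n : nat} (K : set ('rV[R]_n * R)) (m : R) :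
  (forall p q t, 0 <= t -> t <= 1 -> K p -> K q ->
     K (t *: p.1 + (1 - t) *: q.1, t * p.2 + (1 - t) * q.2)) ->
  (forall l, K (0, l) -> m <= l) ->
  (forall p, K p -> exists s, 0 < s /\ exists l, K (- (s *: p.1), l)) ->
  exists y : 'rV_n, forall p, K p -> m + dotp y p.1 <= p.2.
Proof.
move=> Kconv K0 Krad.
suff IH : forall j, (j <= n)%N -> exists y : 'rV_n,
    (forall i : 'I_n, (j <= i)%N -> y 0 i = 0) /\
    forall p, K p -> (forall i : 'I_n, (j <= i)%N -> p.1 0 i = 0) -> m + dotp y p.1 <= p.2.
  have [y [_ Hy]] := IH n (leqnn n).
  exists y => p Kp; apply: Hy => // i; by rewrite leqNgt ltn_ord.
elim => [_|j IHj hj].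
  exists 0; split => [i _|p Kp H0]; first by rewrite mxE.
  have p10 : p.1 = 0 by apply/rowP => i; rewrite [RHS]mxE H0.
  rewrite /dotp big1 ?addr0; last by move=> i _; rewrite mxE mul0r.
  by apply: K0; rewrite -p10 -surjective_pairing.
have [y [y0 Hy]] := IHj (ltnW hj).
pose jj : 'I_n := Ordinal hj.
pose S p := K p /\ forall i : 'I_n, (j.+1 <= i)%N -> p.1 0 i = 0.
pose A (p : 'rV[R]_n * R) := p.2 - m - dotp y p.1.
have key : forall p q, S p -> S q -> 0 < p.1 0 jj -> q.1 0 jj < 0 ->
    A q / q.1 0 jj <= A p / p.1 0 jj.
  move=> p q [Kp Sp] [Kq Sq] pj qj; apply: ratio_key => //.
  set t := - q.1 0 jj / (p.1 0 jj - q.1 0 jj).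
  have t0 : 0 <= t by rewrite /t divr_ge0 // ?oppr_ge0 ?ltW // subr_gt0 (lt_trans qj pj).
  have t1 : t <= 1.
    rewrite /t ler_pdivrMr ?subr_gt0 ?(lt_trans qj pj) //; lra.
  have Kr := Kconv p q t t0 t1 Kp Kq.
  have := Hy _ Kr => /=.
  have H : (forall i : 'I_n, (j <= i)%N ->
     (t *: p.1 + (1 - t) *: q.1) 0 i = 0).
    move=> i ji; rewrite !mxE.
    case: (ltngtP j i) ji => // [ji|ij] _.
      by rewrite Sp // Sq // !mulr0 addr0.
    have -> : i = jj by apply: val_inj.
    rewrite /t; field.
    have := lt_trans qj pj; rewrite -subr_gt0 => h; by rewrite gt_eqF.
  move/(_ H); rewrite dotpDr !dotpZr /A => h; lra.
pose neg := [set r | exists p, S p /\ p.1 0 jj < 0 /\ r = A p / p.1 0 jj].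
pose c := sup neg.
exists (y + c *: delta_mx 0 jj); split.
  move=> i ji; rewrite !mxE y0 ?(ltnW ji) //.
  have : i != jj by apply/eqP => ij; move: ji; rewrite ij /= ltnn.
  by move/negPf => ->; rewrite andbF mulr0 addr0.
move=> p Kp Sp.
have Spp : S p by split.
rewrite dotpDl dotpZl dotp_delta.
suff : c * p.1 0 jj <= A p by rewrite /A; lra.
case: (ltgtP (p.1 0 jj) 0) => [pn|pp|p0].
-
  have [s [s0 [l Kq]]] := Krad p Kp.
  have Sq : S (- (s *: p.1), l).
    split => // i ji /=; by rewrite !mxE Sp // mulr0 oppr0.
  have qp : 0 < (- (s *: p.1), l).1 0 jj by rewrite /= !mxE oppr_gt0 pmulr_rlt0.
  have hub : has_ubound neg.
    exists (A (- (s *: p.1), l) / (- (s *: p.1), l).1 0 jj) => r [q [Sq' [qn ->]]].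
    exact: key.
  have : A p / p.1 0 jj <= c by apply: ub_le_sup => //; exists p.
  rewrite ler_ndivrMr //; by rewrite mulrC.
-
  have [s [s0 [l Kq]]] := Krad p Kp.
  have Sq : S (- (s *: p.1), l).
    split => // i ji /=; by rewrite !mxE Sp // mulr0 oppr0.
  have qn : (- (s *: p.1), l).1 0 jj < 0 by rewrite /= !mxE oppr_lt0 mulr_gt0.
  have : c <= A p / p.1 0 jj.
    apply: ge_sup; first by exists (A (- (s *: p.1), l) / (- (s *: p.1), l).1 0 jj); exists (- (s *: p.1), l).
    move=> r [q [Sq' [qn' ->]]]; exact: key.
  by rewrite ler_pdivlMr.
-
  rewrite p0 mulr0 /A; suff : m + dotp y p.1 <= p.2 by lra.
  apply: Hy => // i ji.
  case: (ltngtP j i) ji => // [ji|ij] _; first by apply: Sp.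
  by have -> : i = jj by apply: val_inj.
Qed.

Lemma entry_le_norm {R : realType} {n : nat} (x : 'rV[R]_n) i : `|x 0 i| <= `|x|.
Proof.
rewrite [X in _ <= X]mx_normrE.
by apply: (le_trans _ (le_bigmax _ _ (0, i))).
Qed.

Lemma closure_approx {R : realType} {n : nat} {D : set 'rV[R]_n} {y} :
  closure D y -> forall e, 0 < e -> exists q, D q /\ forall i, `|y 0 i - q 0 i| < e.
Proof.
move=> cy e e0; have [q [Dq bq]] := cy _ (nbhsx_ballx y e e0).
exists q; split => // i; move: bq; rewrite -ball_normE /ball_ /= => h.
by apply: le_lt_trans h; have := entry_le_norm (y - q) i; rewrite !mxE.
Qed.

Lemma frac_lt {R : realType} (e : R) (n : nat) : 0 < e -> e / n.+1%:R *+ n < e.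
Proof. move=> e0. rewrite -mulr_natr -mulrA gtr_pMr // mulrC ltr_pdivrMr ?ltr0Sn // mul1r ltr_nat //. Qed.

Lemma closure_approx_l1 {R : realType} {n : nat} {D : set 'rV[R]_n} {y} :
  closure D y -> forall e, 0 < e -> exists q, D q /\ l1 (q - y) < e.
Proof.
move=> cy e e0.
have e'0 : 0 < e / n.+1%:R by rewrite divr_gt0 // ltr0Sn.
have [q [Dq hq]] := closure_approx cy _ e'0.
exists q; split => //.
apply: (@le_lt_trans _ _ (\sum_(i < n) (e / n.+1%:R))).
  rewrite /l1; apply: ler_sum => i _; rewrite !mxE distrC; exact: ltW.
rewrite sumr_const card_ord; exact: frac_lt.
Qed.

Lemma closure_approx_prod {R : realType} {n : nat} {C : set ('rV[R]_n * R)} {p} :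
  closure C p -> forall e, 0 < e -> exists q, C q /\
    (forall i, `|p.1 0 i - q.1 0 i| < e) /\ `|p.2 - q.2| < e.
Proof.
move=> cp e e0; have [q [Cq [b1 b2]]] := cp _ (nbhsx_ballx p e e0).
exists q; split => //; split.
  move=> i; move: b1; rewrite -ball_normE /ball_ /= => h.
  by apply: le_lt_trans h; have := entry_le_norm (p.1 - q.1) i; rewrite !mxE.
by move: b2; rewrite -ball_normE /ball_ /=.
Qed.

Lemma closure_proj {R : realType} {n : nat} (C : set ('rV[R]_n * R)) x mu :
  closure C (x, mu) -> closure [set z | exists l, C (z, l)] x.
Proof.
move=> cp B /nbhs_ex [d hB].
have [q [Cq [b1 b2]]] := cp _ (nbhsx_ballx (x, mu) d%:num (gt0 d)).
exists q.1; split; first by exists q.2; rewrite -surjective_pairing.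
exact: hB.
Qed.

Lemma aff_affine {R : realType} {n : nat} (O : set 'rV[R]_n) : affine_set (aff O).
Proof. move=> x y t Ax Ay B PB; have [aB OB] := PB; apply: aB; [exact: Ax B PB | exact: Ay B PB]. Qed.

Lemma sub_aff {R : realType} {n : nat} (O : set 'rV[R]_n) : O `<=` aff O.
Proof. by move=> x Ox B [_ OB]; apply: OB. Qed.

Lemma affL0 {R : realType} {n : nat} (A : set 'rV[R]_n) y : A y -> A (y + 0).
Proof. by rewrite addr0. Qed.

Lemma affLZ {R : realType} {n : nat} (A : set 'rV[R]_n) y v c :
  affine_set A -> A y -> A (y + v) -> A (y + c *: v).
Proof.
move=> aA Ay Av; have := aA _ _ c Ay Av.
by rewrite scalerDr scalerBl scale1r addrA subrK.
Qed.

Lemma affLD {R : realType} {n : nat} (A : set 'rV[R]_n) y v w :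
  affine_set A -> A y -> A (y + v) -> A (y + w) -> A (y + (v + w)).
Proof.
move=> aA Ay Av Aw.
have := aA _ _ (1/2) Av Aw => Am.
have Am' : A (y + (2^-1 *: (v + w))).
  suff -> : y + 2^-1 *: (v + w) = (1 - 1/2) *: (y + v) + (1/2) *: (y + w) by [].
  by apply/rowP => i; rewrite !mxE; field.
have := @affLZ _ _ A y (2^-1 *: (v+w)) 2 aA Ay Am'; rewrite scalerA mulfV ?scale1r //.
Qed.

Lemma affLsum {R : realType} {n k : nat} (A : set 'rV[R]_n) y (c : 'rV[R]_k) (B : 'M[R]_(k, n)) :
  affine_set A -> A y -> (forall i, A (y + row i B)) -> A (y + c *m B).
Proof.
move=> aA Ay hB; rewrite mulmx_sum_row.
elim/big_ind: _ => [|u v Au Av|i _]; first exact: affL0.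
  exact: affLD.
exact: affLZ.
Qed.

Lemma span_exists {R : realType} {n : nat} (A : set 'rV[R]_n) y :
  affine_set A -> A y ->
  exists B : 'M[R]_n, (forall i, A (y + row i B)) /\ forall v, A (y + v) -> (v <= B)%MS.
Proof.
move=> aA Ay.
pose P k := `[< exists B : 'M[R]_n, (forall i, A (y + row i B)) /\ \rank B = k >].
have exP : exists k, P k.
  exists 0%N; apply/asboolP; exists 0; split; last exact: mxrank0.
  by move=> i; rewrite row0; exact: affL0.
have ubP : forall k, P k -> (k <= n)%N.
  by move=> k /asboolP [B [_ <-]]; exact: rank_leq_col.
case: (ex_maxnP exP ubP) => k /asboolP [B [hB rB]] kmax.
exists B; split => // v Av; apply/negPn/negP => vB.
pose B' := <<col_mx B v>>%MS.
have PB' : P (\rank B').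
  apply/asboolP; exists B'; split => // i.
  have := row_sub i B'; rewrite genmxE => /submxP [c ->].
  rewrite -(hsubmxK c) mul_row_col.
  apply: affLD => //; first exact: affLsum.
  rewrite [rsubmx c]mx11_scalar mul_scalar_mx; exact: affLZ.
have := kmax _ PB'; rewrite genmxE.
have : (B < col_mx B v)%MS.
  rewrite ltmxE; apply/andP; split; first by rewrite -addsmxE addsmxSl.
  by rewrite col_mx_sub submx_refl /=.
by move/rank_ltmx; rewrite rB => h1 h2; move: (leq_ltn_trans h2 h1); rewrite ltnn.
Qed.

Lemma orthant {R : realType} {n k : nat} (D : set 'rV[R]_n) (x0 : 'rV[R]_n) (B : 'M[R]_(k, n)) :
  (forall a b t, 0 <= t -> t <= 1 -> D a -> D b -> D (t *: a + (1 - t) *: b)) ->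
  (forall eps : 'I_k -> bool, exists c : 'rV[R]_k, D (x0 + c *m B) /\
       forall i, if eps i then 0 < c 0 i else c 0 i < 0) ->
  D x0.
Proof.
move=> Dc H.
suff Q : forall j, (j <= k)%N -> forall eps : 'I_k -> bool, exists c : 'rV[R]_k,
    D (x0 + c *m B) /\ (forall i : 'I_k, (i < j)%N -> c 0 i = 0) /\
    forall i : 'I_k, (j <= i)%N -> if eps i then 0 < c 0 i else c 0 i < 0.
  have [c [Dc' [c0 _]]] := Q k (leqnn k) (fun _ => true).
  have c00 : c = 0 by apply/rowP => i; rewrite mxE c0.
  by rewrite c00 mul0mx addr0 in Dc'.
elim => [_ eps|j IH hj eps].
  have [c [Dc' hc]] := H eps; exists c; split => //; split => // i.
pose jj : 'I_k := Ordinal hj.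
have [cp [Dp [p0 ps]]] := IH (ltnW hj) (fun i => if i == jj then true else eps i).
have [cm [Dm [m0 ms]]] := IH (ltnW hj) (fun i => if i == jj then false else eps i).
have hp := ps jj (leqnn j); rewrite eqxx /= in hp.
have hm := ms jj (leqnn j); rewrite eqxx /= in hm.
set t := - cm 0 jj / (cp 0 jj - cm 0 jj).
have pm : 0 < cp 0 jj - cm 0 jj by rewrite subr_gt0 (lt_trans hm hp).
have t0 : 0 <= t by rewrite /t divr_ge0 // ?oppr_ge0 ?ltW.
have t1 : t <= 1 by rewrite /t ler_pdivrMr //; lra.
exists (t *: cp + (1 - t) *: cm); split.
  have := Dc _ _ t t0 t1 Dp Dm; congr D.
  rewrite mulmxDl -!scalemxAl !scalerDr addrACA -scalerDl.
  have -> : t + (1 - t) = 1 by lra.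
  by rewrite scale1r.
split.
  move=> i; rewrite ltnS leq_eqVlt => /orP [/eqP ij|ij].
    have -> : i = jj by apply: val_inj.
    rewrite !mxE /t; field; by rewrite gt_eqF.
  by rewrite !mxE p0 // m0 // !mulr0 addr0.
move=> i ji.
have ij : (i == jj) = false by apply/negP => /eqP ij; move: ji; rewrite ij /= ltnn.
have := ps i (ltnW ji); have := ms i (ltnW ji); rewrite ij !mxE.
case: (eps i) => h1 h2; nra.
Qed.

Lemma l1_sum {R : realType} {n : nat} (I : Type) (r : seq I) (F : I -> 'rV[R]_n) :
  l1 (\sum_(i <- r) F i) <= \sum_(i <- r) l1 (F i).
Proof.
elim/big_rec2: _ => [|i a b _ h]; first by rewrite /l1 big1 // => i _; rewrite mxE normr0.
by apply: le_trans (l1D _ _) _; rewrite lerD2l.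
Qed.

Lemma ri_in {R : realType} {n : nat} (D O : set 'rV[R]_n) (y : 'rV[R]_n) (d : R) :
  (forall a b t, 0 <= t -> t <= 1 -> D a -> D b -> D (t *: a + (1 - t) *: b)) ->
  D `<=` O -> O `<=` closure D -> 0 < d ->
  (forall z, aff O z -> l1 (z - y) < d -> O z) -> aff O y -> D y.
Proof.
move=> Dc DO OD d0 hO Ay.
have aA := aff_affine O.
have [B [hB hspan]] := @span_exists _ _ (aff O) y aA Ay.
pose P := pinvmx B.
pose M := \sum_i l1 (row i B) + 1.
pose MP := \sum_i \sum_j `|P i j| + 1.
have SM : 0 <= \sum_i l1 (row i B) by apply: sumr_ge0 => i _; exact: l1_ge0.
have M0 : 0 < M by rewrite /M ltr_pwDr.
have SMP : 0 <= \sum_i \sum_j `|P i j| by apply: sumr_ge0 => i _; apply: sumr_ge0.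
have MP0 : 0 < MP by rewrite /MP ltr_pwDr.
pose r := d / (2 * M).
have r0 : 0 < r by rewrite /r divr_gt0 // mulr_gt0.
apply: (@orthant _ _ _ D y B Dc) => eps.
pose s : 'rV[R]_n := \row_i (if eps i then r else - r).
pose ye := y + s *m B.
have Lye : aff O ye by apply: affLsum.
have l1s : l1 (ye - y) < d.
  rewrite /ye (addrC y) addrK mulmx_sum_row.
  apply: le_lt_trans (l1_sum _ _ _) _.
  have -> : \sum_i l1 (s 0 i *: row i B) = r * \sum_i l1 (row i B).
    rewrite mulr_sumr; apply: eq_bigr => i _; rewrite l1Z mxE.
    by case: (eps i); rewrite ?normrN gtr0_norm.
  have : r * M = d / 2 by rewrite /r /M; field; rewrite gt_eqF.
  rewrite /M mulrDr mulr1 => h.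
  have : d / 2 < d by rewrite ltr_pdivrMr //; lra.
  lra.
have Oye : O ye := hO _ Lye l1s.
have de0 : 0 < r / MP by rewrite divr_gt0.
have [q [Dq hq]] := closure_approx_l1 (OD _ Oye) _ de0.
have qB : (q - ye <= B)%MS.
  apply: hspan.
  have -> : q - ye = (q - y) + (-1) *: (s *m B) by rewrite /ye opprD addrA scaleN1r.
  apply: (@affLD _ _ (aff O) y (q - y) ((-1) *: (s *m B)) aA Ay).
    by rewrite addrCA subrr addr0; apply: sub_aff; exact: DO.
  by apply: (@affLZ _ _ (aff O) y (s *m B) (-1) aA Ay); apply: affLsum.
exists (s + (q - ye) *m P); split.
  rewrite mulmxDl mulmxKpV //.
  have -> : y + (s *m B + (q - ye)) = q by apply/rowP => i; rewrite /ye !mxE; ring.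
  exact: Dq.
move=> i.
have he : `|((q - ye) *m P) 0 i| < r.
  rewrite mxE.
  apply: (@le_lt_trans _ _ (l1 (q - ye) * MP)); last by rewrite -ltr_pdivlMr.
  apply: le_trans (ler_norm_sum _ _ _) _.
  rewrite /l1 mulr_suml; apply: ler_sum => k _; rewrite normrM ler_wpM2l //.
  apply: (@le_trans _ _ (\sum_i0 \sum_j `|P i0 j|)); last by rewrite /MP lerDl.
  apply: (@le_trans _ _ (\sum_j `|P k j|)).
    by rewrite (bigD1 i) //= lerDl; apply: sumr_ge0.
  by rewrite [X in _ <= X](bigD1 k) //= lerDl; apply: sumr_ge0 => i0 _; apply: sumr_ge0.
move: he; rewrite ltr_norml !mxE => /andP [h1 h2].
by case: (eps i); lra.
Qed.

Lemma ri_radial {R : realType} {n : nat} (D O : set 'rV[R]_n) (y : 'rV[R]_n) (d : R) :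
  (forall a b t, 0 <= t -> t <= 1 -> D a -> D b -> D (t *: a + (1 - t) *: b)) ->
  D `<=` O -> O `<=` closure D -> 0 < d ->
  (forall z, aff O z -> l1 (z - y) < d -> O z) -> aff O y ->
  forall x, D x -> exists s, 0 < s /\ forall s', 0 < s' -> s' <= s -> D (y + s' *: (y - x)).
Proof.
move=> Dc DO OD d0 hO Ay x Dx.
have L0 := l1_ge0 (y - x).
pose s := d / (2 * (l1 (y - x) + 1)).
have s0 : 0 < s by rewrite /s divr_gt0 // mulr_gt0 // ltr_pwDr.
have sL : s * (l1 (y - x) + 1) = d / 2 by rewrite /s; field; rewrite gt_eqF // ltr_pwDr.
exists s; split => // s' s'0 s's.
apply: (@ri_in _ _ D O _ (d / 2) Dc DO OD); first by rewrite divr_gt0.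
  move=> z Az hz; apply: hO => //.
  have -> : z - y = (z - (y + s' *: (y - x))) + s' *: (y - x) by rewrite opprD addrA subrK.
  apply: le_lt_trans (l1D _ _) _; rewrite l1Z gtr0_norm //.
  have : s' * l1 (y - x) <= s * l1 (y - x) by rewrite ler_wpM2r.
  have : d / 2 < d by rewrite ltr_pdivrMr //; lra.
  nra.
have -> : y + s' *: (y - x) = (1 - (- s')) *: y + (- s') *: x.
  by apply/rowP => i; rewrite !mxE; ring.
apply: aff_affine => //; apply: sub_aff; exact: DO.
Qed.

Lemma closure_half {R : realType} {n : nat} (C : set ('rV[R]_n * R)) (a : 'rV[R]_n) (c : R) p :
  closure C p -> (forall q, C q -> 0 <= q.2 + dotp a q.1 + c) -> 0 <= p.2 + dotp a p.1 + c.
Proof.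
move=> cp H; rewrite leNgt; apply/negP => hlt.
set g := p.2 + dotp a p.1 + c in hlt.
have La := l1_ge0 a.
pose e := - g / (2 * (l1 a + 1)).
have e0 : 0 < e by rewrite divr_gt0 // ?oppr_gt0 // mulr_gt0 // ltr_pwDr.
have he : l1 a * e + e = - g / 2.
  rewrite /e; field; by rewrite gt_eqF // ltr_pwDr.
have [q [Cq [h1 h2]]] := closure_approx_prod cp _ e0.
have := H q Cq.
have hd : `|dotp a (q.1 - p.1)| <= l1 a * e.
  apply: dotp_le => i; rewrite !mxE distrC; exact: ltW.
rewrite dotpBr in hd.
move: hd h2; rewrite ler_norml ltr_norml => /andP [hd1 hd2] /andP [h21 h22].
rewrite /g in hlt he.
lra.
Qed.

Lemma nc_data {R : realType} {n : nat} {f : 'rV[R]_n -> \bar R} :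
  nearly_convex_fun f ->
  exists C : set ('rV[R]_n * R),
   (forall p q t, 0 <= t -> t <= 1 -> C p -> C q ->
      C (t *: p.1 + (1 - t) *: q.1, t * p.2 + (1 - t) * q.2)) /\
   (forall x mu, C (x, mu) -> (f x <= mu%:E)%E) /\
   (forall x r, f x = r%:E -> closure C (x, r)).
Proof.
move=> [C [cC [Cepi epiC]]].
exists C; split; last split.
- move=> p q t t0 t1 Cp Cq.
  by have := @convex_comb _ _ C p q t cC t0 t1 Cp Cq.
- by move=> x mu /Cepi.
- move=> x r fx; apply: epiC; rewrite /epi /= fx; exact: lexx.
Qed.

Lemma dom_data {R : realType} {n : nat} {f : 'rV[R]_n -> \bar R} {C : set ('rV[R]_n * R)} :
   proper_fun f ->
   (forall p q t, 0 <= t -> t <= 1 -> C p -> C q ->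
      C (t *: p.1 + (1 - t) *: q.1, t * p.2 + (1 - t) * q.2)) ->
   (forall x mu, C (x, mu) -> (f x <= mu%:E)%E) ->
   (forall x r, f x = r%:E -> closure C (x, r)) ->
   let D := [set x | exists mu, C (x, mu)] in
   (forall a b t, 0 <= t -> t <= 1 -> D a -> D b -> D (t *: a + (1 - t) *: b)) /\
   D `<=` dom f /\ dom f `<=` closure D.
Proof.
move=> [_ pf] Cc Cf Ccl D; split; last split.
- move=> a b t t0 t1 [ma Ca] [mb Cb].
  by exists (t * ma + (1 - t) * mb); have := Cc _ _ t t0 t1 Ca Cb.
- move=> x [mu Cx]; rewrite /dom /=.
  by apply: le_lt_trans (Cf _ _ Cx) _; rewrite ltry.
- move=> x; rewrite /dom /=.
  have := pf x; case E : (f x) => [r| |] // _ _.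
  exact: (@closure_proj _ _ C x r (Ccl x r E)).
Qed.

Lemma ri_l1 {R : realType} {n : nat} {O : set 'rV[R]_n} {x0} :
  ri O x0 -> O x0 /\ exists d, 0 < d /\ forall z, aff O z -> l1 (z - x0) < d -> O z.
Proof.
move=> [Ox [d [d0 hd]]]; split => //; exists d; split => // z Az hz.
apply: hd; split => //; rewrite /eball /=.
exact: le_lt_trans (enorm_le_l1 _) hz.
Qed.

Lemma fin_of {R : realType} {e : \bar R} {mu : R} :
  (-oo < e)%E -> (e <= mu%:E)%E -> exists r, e = r%:E /\ r <= mu.
Proof.
case: e => [r| |] //= _.
by rewrite lee_fin => h; exists r.
Qed.

Lemma fin_of2 {R : realType} {e : \bar R} :
  (-oo < e)%E -> (e < +oo)%E -> exists r, e = r%:E.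
Proof. by case: e => [r| |] //= _ _; exists r. Qed.

Lemma hard_part {R : realType} {n : nat} (f1 f2 : 'rV[R]_n -> \bar R) (w : 'rV[R]_n) (a : R) :
  proper_fun f1 -> proper_fun f2 -> nearly_convex_fun f1 -> nearly_convex_fun f2 ->
  ri (dom f1) `&` ri (dom f2) !=set0 ->
  (forall x, ((dotp w x)%:E - (f1 x + f2 x) <= a%:E)%E) ->
  exists w1 w2 : 'rV[R]_n, w = w1 + w2 /\ (fconj f1 w1 + fconj f2 w2 <= a%:E)%E.
Proof.
move=> pf1 pf2 nc1 nc2 [x0 [ri1 ri2]] ha.
have [C1 [Cc1 [Cf1 Ccl1]]] := nc_data nc1.
have [C2 [Cc2 [Cf2 Ccl2]]] := nc_data nc2.
have [Dc1 [DO1 OD1]] := dom_data pf1 Cc1 Cf1 Ccl1.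
have [Dc2 [DO2 OD2]] := dom_data pf2 Cc2 Cf2 Ccl2.
set D1 := [set x | exists mu, C1 (x, mu)] in Dc1 DO1 OD1.
set D2 := [set x | exists mu, C2 (x, mu)] in Dc2 DO2 OD2.
have [Ox1 [d1 [d10 hd1]]] := ri_l1 ri1.
have [Ox2 [d2 [d20 hd2]]] := ri_l1 ri2.
have Ax1 : aff (dom f1) x0 := @sub_aff _ _ (dom f1) x0 Ox1.
have Ax2 : aff (dom f2) x0 := @sub_aff _ _ (dom f2) x0 Ox2.
have rad1 := @ri_radial _ _ D1 (dom f1) x0 d1 Dc1 DO1 OD1 d10 hd1 Ax1.
have rad2 := @ri_radial _ _ D2 (dom f2) x0 d2 Dc2 DO2 OD2 d20 hd2 Ax2.
pose K := [set p : 'rV[R]_n * R | exists x mu1 z mu2, C1 (x, mu1) /\ C2 (z, mu2) /\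
              p = (z - x, mu1 + mu2 - dotp w x)].
pose m := - a.
have Kconv : forall p q t, 0 <= t -> t <= 1 -> K p -> K q ->
     K (t *: p.1 + (1 - t) *: q.1, t * p.2 + (1 - t) * q.2).
  move=> p q t t0 t1 [x [m1 [z [m2 [Cx [Cz ->]]]]]] [x' [m1' [z' [m2' [Cx' [Cz' ->]]]]]] /=.
  exists (t *: x + (1 - t) *: x'), (t * m1 + (1 - t) * m1'),
         (t *: z + (1 - t) *: z'), (t * m2 + (1 - t) * m2').
  split; first exact: (Cc1 (x, m1) (x', m1') t t0 t1 Cx Cx').
  split; first exact: (Cc2 (z, m2) (z', m2') t t0 t1 Cz Cz').
  congr pair; first by apply/rowP => i; rewrite !mxE; ring.
  rewrite dotpDr !dotpZr; ring.
have K0 : forall l, K (0, l) -> m <= l.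
  move=> l [x [m1 [z [m2 [Cx [Cz [e1 e2]]]]]]].
  have zx : z = x by apply/eqP; rewrite -subr_eq0 -e1.
  subst z; rewrite e2.
  have [r1 [E1 h1]] := fin_of (pf1.2 x) (Cf1 _ _ Cx).
  have [r2 [E2 h2]] := fin_of (pf2.2 x) (Cf2 _ _ Cz).
  have : ((dotp w x - (r1 + r2))%:E <= a%:E)%E by have := ha x; rewrite E1 E2.
  rewrite lee_fin /m; lra.
have Krad : forall p, K p -> exists s, 0 < s /\ exists l, K (- (s *: p.1), l).
  move=> p [x [m1 [z [m2 [Cx [Cz ->]]]]]] /=.
  have [s1 [s10 hs1]] := rad1 x (ex_intro _ m1 Cx).
  have [s2 [s20 hs2]] := rad2 z (ex_intro _ m2 Cz).
  have [s [s0 [ss1 ss2]]] : exists s, 0 < s /\ s <= s1 /\ s <= s2.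
    case: (leP s1 s2) => h; [exists s1 | exists s2]; split => //; split => //; exact: ltW.
  have [mb Cb] := hs1 s s0 ss1.
  have [ma Ca] := hs2 s s0 ss2.
  exists s; split => //; exists (mb + ma - dotp w (x0 + s *: (x0 - x))).
  exists (x0 + s *: (x0 - x)), mb, (x0 + s *: (x0 - z)), ma; split => //; split => //.
  by congr pair; apply/rowP => i; rewrite !mxE; ring.
have [y Hy] := @HB_sep _ _ K m Kconv K0 Krad.
have HC : forall x m1 z m2, C1 (x, m1) -> C2 (z, m2) ->
    m + dotp y (z - x) <= m1 + m2 - dotp w x.
  move=> x m1 z m2 Cx Cz; apply: (Hy (z - x, m1 + m2 - dotp w x)).
  by exists x, m1, z, m2.
have Hcl : forall x r1 z r2, f1 x = r1%:E -> f2 z = r2%:E ->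
    m + dotp y (z - x) <= r1 + r2 - dotp w x.
  move=> x r1 z r2 E1 E2.
  have step1 : forall z' m2, C2 (z', m2) -> 0 <= r1 + dotp (y - w) x + (m2 - dotp y z' - m).
    move=> z' m2 Cz'.
    have := @closure_half _ _ C1 (y - w) (m2 - dotp y z' - m) (x, r1) (Ccl1 x r1 E1).
    apply => -[x' m1'] Cx' /=.
    have := HC x' m1' z' m2 Cx' Cz'; rewrite dotpBl dotpBr; lra.
  have := @closure_half _ _ C2 (- y) (r1 + dotp (y - w) x - m) (z, r2) (Ccl2 z r2 E2).
  have H2 : forall q, C2 q -> 0 <= q.2 + dotp (- y) q.1 + (r1 + dotp (y - w) x - m).
    move=> [z' m2] Cz' /=; have := step1 z' m2 Cz'; rewrite dotpNl; lra.
  move/(_ H2) => /=; rewrite dotpNl dotpBl dotpBr; lra.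
exists (w - y), y; split; first by rewrite subrK.
have Q : forall x z r1 r2, f1 x = r1%:E -> f2 z = r2%:E ->
    (dotp (w - y) x - r1) + (dotp y z - r2) <= a.
  move=> x z r1 r2 E1 E2; have := Hcl x r1 z r2 E1 E2; rewrite /m dotpBl dotpBr; lra.
have claim1 : forall z r2, f2 z = r2%:E -> (fconj f1 (w - y) <= (a - (dotp y z - r2))%:E)%E.
  move=> z r2 E2; apply: ge_ereal_sup => _ [x _ <-].
  have := pf1.2 x; case E1 : (f1 x) => [r1| |] // _; last exact: leNye.
  rewrite -EFinB lee_fin; have := Q x z r1 r2 E1 E2; lra.
have [r10 E10] := fin_of2 (pf1.2 x0) Ox1.
have [r20 E20] := fin_of2 (pf2.2 x0) Ox2.
have [s1 Es1] : exists s1, fconj f1 (w - y) = s1%:E.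
  have up := claim1 x0 r20 E20.
  have low : ((dotp (w - y) x0)%:E - f1 x0 <= fconj f1 (w - y))%E.
    by apply: ereal_sup_ubound; exists x0.
  rewrite E10 in low.
  case E : (fconj f1 (w - y)) up low => [s| |] //; by exists s.
have claim2 : (fconj f2 y <= (a - s1)%:E)%E.
  apply: ge_ereal_sup => _ [z _ <-].
  have := pf2.2 z; case E2 : (f2 z) => [r2| |] // _; last exact: leNye.
  have := claim1 z r2 E2; rewrite Es1 lee_fin => h.
  rewrite -EFinB lee_fin; lra.
rewrite Es1; apply: le_trans (leeD2l _ claim2) _; rewrite -EFinD lee_fin; lra.
Qed.

Lemma easy_part {R : realType} {n : nat} (f1 f2 : 'rV[R]_n -> \bar R) (w w1 w2 : 'rV[R]_n) :
  proper_fun f1 -> proper_fun f2 -> w1 + w2 = w ->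
  (fconj (fun x => (f1 x + f2 x)%E) w <= fconj f1 w1 + fconj f2 w2)%E.
Proof.
move=> pf1 pf2 hw; apply: ge_ereal_sup => _ [x _ <-].
have l1 : ((dotp w1 x)%:E - f1 x <= fconj f1 w1)%E by apply: ereal_sup_ubound; exists x.
have l2 : ((dotp w2 x)%:E - f2 x <= fconj f2 w2)%E by apply: ereal_sup_ubound; exists x.
have := pf1.2 x; have := pf2.2 x.
case E1 : (f1 x) l1 => [r1| |] l1 //; case E2 : (f2 x) l2 => [r2| |] l2 // _ _;
  try exact: leNye.
apply: le_trans (leeD l1 l2).
have : ((dotp w x - (r1 + r2))%:E <= (dotp w1 x - r1 + (dotp w2 x - r2))%:E)%E.
  by rewrite lee_fin -hw dotpDl; lra.
by [].
Qed.

Theorem theorem6p6 (R : realType) (n : nat) (f1 f2 : 'rV[R]_n -> \bar R) :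
  proper_fun f1 -> proper_fun f2 ->
  nearly_convex_fun f1 -> nearly_convex_fun f2 ->
  ri (dom f1) `&` ri (dom f2) !=set0 ->
  forall w : 'rV[R]_n,
    fconj (fun x => (f1 x + f2 x)%E) w = infconv (fconj f1) (fconj f2) w /\
    (fconj (fun x => (f1 x + f2 x)%E) w \is a fin_num ->
     exists w1 w2 : 'rV[R]_n, w = w1 + w2 /\
       fconj (fun x => (f1 x + f2 x)%E) w = (fconj f1 w1 + fconj f2 w2)%E).
Proof.
move=> pf1 pf2 nc1 nc2 hri w.
have Ege : (fconj (fun x => (f1 x + f2 x)%E) w <= infconv (fconj f1) (fconj f2) w)%E.
  apply: le_ereal_inf_tmp => _ [[u v] /= huv <-]; exact: easy_part.
have [x0 [ri1 ri2]] := hri.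
have [r1 E1] := fin_of2 (pf1.2 x0) ri1.1.
have [r2 E2] := fin_of2 (pf2.2 x0) ri2.1.
have low : ((dotp w x0)%:E - (f1 x0 + f2 x0) <= fconj (fun x => (f1 x + f2 x)%E) w)%E.
  by apply: ereal_sup_ubound; exists x0.
rewrite E1 E2 in low.
have ha : forall x, ((dotp w x)%:E - (f1 x + f2 x) <= fconj (fun x => (f1 x + f2 x)%E) w)%E.
  by move=> x; apply: ereal_sup_ubound; exists x.
case Ea : (fconj (fun x => (f1 x + f2 x)%E) w) Ege low ha => [a| |] Ege low ha //.
- have [w1 [w2 [hw hle]]] := hard_part _ _ _ _ pf1 pf2 nc1 nc2 hri ha.
  have ge : (a%:E <= fconj f1 w1 + fconj f2 w2)%E by rewrite -Ea; apply: easy_part.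
  have inf_le : (infconv (fconj f1) (fconj f2) w <= fconj f1 w1 + fconj f2 w2)%E.
    by apply: ereal_inf_lbound; exists (w1, w2) => //=; rewrite hw.
  split.
    apply/eqP; rewrite eq_le Ege /=; exact: le_trans inf_le hle.
  move=> _; exists w1, w2; split => //.
  by apply/eqP; rewrite eq_le ge hle.
- split; first by apply/eqP; rewrite eq_le Ege leey.
  by [].
Qed.
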